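(* For $\mu,\nu>0$, $\Gamma\in\mathbb R\setminus\{0\}$ and $a\in\mathbb Q$, $$\big(E_{\mu,\Gamma,a}*G_\nu\big)(q)=\sqrt{\frac{2\pi\mu}{\Gamma^2}}\;G_{\mu+\nu}(q)\;\vartheta\!\begin{bmatrix}0\\ a\end{bmatrix}\!\Big(-\frac{q}{(1+\nu/\mu)\Gamma},\,\frac{2\pi i\nu}{(1+\nu/\mu)\Gamma^2}\Big)\quad\text{for all }q\in\mathbb R.$$
   Context: $G_{\nu}(x)=(2\pi\nu)^{-1/2}e^{-x^2/(2\nu)}$; $(f*g)(x)=\int f(y)g(x-y)\,dy$; $E_{\mu,\Gamma,a}(x)=e^{-x^2/(2\mu)}\sum_{s\in\mathbb Z}\delta(x-(s+a)\Gamma)$ (a Gaussian-weighted Dirac comb), so $(E_{\mu,\Gamma,a}*G_\nu)(q)=\sum_{s}e^{-(s+a)^2\Gamma^2/(2\mu)}G_\nu(q-(s+a)\Gamma)$. Theta function with characteristics: for $a,b\in\mathbb Q$, $z\in\mathbb C$, $\mathrm{Im}\,\tau>0$, $\vartheta\!\begin{bmatrix}a\\ b\end{bmatrix}\!(z,\tau)=\sum_{s\in\mathbb Z}\exp[\pi i\tau(s+a)^2+2\pi i(z+b)(s+a)]$. *)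

(* Defs.v *)
From Stdlib Require Import Reals QArith Qreals ZArith.
From Coquelicot Require Export Coquelicot.
Open Scope R_scope.

Definition Gauss (nu x : R) : R := / sqrt (2 * PI * nu) * exp (- x ^ 2 / (2 * nu)).

Definition zsum_R (f : Z -> R) : R :=
  Series (fun n : nat => f (Z.of_nat n)) + Series (fun n : nat => f (- Z.of_nat (S n))%Z).

Definition zsum_C (f : Z -> C) : C :=
  (zsum_R (fun s => Re (f s)), zsum_R (fun s => Im (f s))).

Definition cexp (z : C) : C := (exp (Re z) * cos (Im z), exp (Re z) * sin (Im z)).

Definition theta (a b : Q) (z tau : C) : C :=
  zsum_C (fun s : Z =>
    cexp (RtoC PI * Ci * tau * RtoC ((IZR s + Q2R a) ^ 2)
          + RtoC (2 * PI) * Ci * (z + RtoC (Q2R b)) * RtoC (IZR s + Q2R a))%C).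

Definition E_conv_G (mu Gamma : R) (a : Q) (nu q : R) : R :=
  zsum_R (fun s : Z =>
    exp (- ((IZR s + Q2R a) ^ 2 * Gamma ^ 2) / (2 * mu))
    * Gauss nu (q - (IZR s + Q2R a) * Gamma)).

(* Main.v *)
Require Import Defs.
From Stdlib Require Import Reals QArith Qreals ZArith.
From Coquelicot Require Import Coquelicot.
Open Scope R_scope.
From Stdlib Require Import Lra Lia.


Lemma tail_bound (a : nat -> R) (C r : R) :
  0 < r < 1 -> (forall n, Rabs (a n) <= C * r ^ n) ->
  ex_series a /\
  forall N, Rabs (Series a - sum_f_R0 a N) <= C * r ^ (S N) / (1 - r).
Proof.
  intros Hr Ha.
  assert (Hg : forall k, ex_series (fun n => C * r ^ k * r ^ n)).
  { intro k. exists (C * r ^ k * / (1 - r)).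
    apply (is_series_scal_l (C * r ^ k) (fun n => r ^ n)). apply is_series_geom.
    rewrite Rabs_pos_eq; lra. }
  assert (Hex : ex_series a).
  { apply (ex_series_le a (fun n => C * r ^ 0 * r ^ n)).
    - intro n. rewrite pow_O, Rmult_1_r. apply Ha.
    - apply Hg. }
  split; auto.
  intro N.
  rewrite (Series_incr_n a (S N)) by (lia || auto). simpl pred.
  replace (sum_f_R0 a N + Series (fun k => a (S N + k)%nat) - sum_f_R0 a N)
    with (Series (fun k => a (S N + k)%nat)) by ring.
  assert (Hb : forall k, Rabs (a (S N + k)%nat) <= C * r ^ (S N) * r ^ k).
  { intro k. rewrite Rmult_assoc, <- pow_add. apply Ha. }
  assert (Hex2 : ex_series (fun k => Rabs (a (S N + k)%nat))).
  { apply (@ex_series_le _ R_CompleteNormedModule (fun k => Rabs (a (S N + k)%nat)) (fun k => C * r ^ (S N) * r ^ k)); auto.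
    intro n. unfold norm; simpl. rewrite Rabs_Rabsolu. apply Hb. }
  eapply Rle_trans. apply Series_Rabs; auto.
  eapply Rle_trans. apply Series_le. 2: apply (Hg (S N)).
  intro n. split. apply Rabs_pos. apply Hb.
  rewrite Series_scal_l, Series_geom. unfold Rdiv. lra.
  rewrite Rabs_pos_eq; lra.
Qed.

Definition UBound (f : nat -> R -> R) (r : R) :=
  forall X, 0 <= X -> exists C, forall n x, Rabs x <= X -> Rabs (f n x) <= C * r ^ n.

Lemma psum_cont (f : nat -> R -> R) N x :
  (forall n, continuity_pt (f n) x) ->
  continuity_pt (fun u => sum_f_R0 (fun n => f n u) N) x.
Proof.
  intros Hc. induction N as [|N IH]; simpl.
  - apply Hc.
  - apply continuity_pt_plus; auto.
Qed.

Lemma tail_small (C r eps : R) : 0 < r < 1 -> 0 < eps ->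
  exists N, forall n, (n >= N)%nat -> C * r ^ (S n) / (1 - r) < eps.
Proof.
  intros Hr He.
  destruct (pow_lt_1_zero r ltac:(rewrite Rabs_pos_eq; lra) (eps * (1 - r) / (Rabs C + 1)))
    as [N HN].
  { apply Rdiv_lt_0_compat. nra. pose proof (Rabs_pos C); lra. }
  exists N. intros n Hn.
  specialize (HN (S n) ltac:(lia)).
  rewrite Rabs_pos_eq in HN by (apply pow_le; lra).
  assert (Hp : 0 <= r ^ S n) by (apply pow_le; lra).
  apply Rmult_lt_compat_r with (r := Rabs C + 1) in HN; [|pose proof (Rabs_pos C); lra].
  unfold Rdiv in *. rewrite Rmult_assoc, Rinv_l in HN by (pose proof (Rabs_pos C); lra).
  apply Rmult_lt_reg_r with (1 - r). lra.
  rewrite Rmult_assoc, Rinv_l by lra.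
  pose proof (Rle_abs C). nra.
Qed.

Lemma useries_ex f r : 0 < r < 1 -> UBound f r -> forall x, ex_series (fun n => f n x).
Proof.
  intros Hr Hb x. destruct (Hb (Rabs x) (Rabs_pos x)) as [C HC].
  apply (tail_bound _ C r Hr). intro n. apply HC. lra.
Qed.

Lemma useries_cont f r : 0 < r < 1 -> (forall n x, continuity_pt (f n) x) -> UBound f r ->
  forall x, continuity_pt (fun u => Series (fun n => f n u)) x.
Proof.
  intros Hr Hc Hb x.
  destruct (Hb (Rabs x + 1) ltac:(pose proof (Rabs_pos x); lra)) as [C HC].
  apply continuity_pt_locally. intros eps.
  destruct (tail_small C r (eps / 3) Hr ltac:(pose proof (cond_pos eps); lra)) as [N HN].
  specialize (HN N (Nat.le_refl _)).
  pose proof (psum_cont f N x (fun n => Hc n x)) as Hp.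
  rewrite continuity_pt_locally in Hp.
  assert (He3 : 0 < eps / 3) by (pose proof (cond_pos eps); lra).
  specialize (Hp (mkposreal _ He3)).
  assert (Hl : locally x (fun u => Rabs (u - x) < 1)).
  { exists (mkposreal 1 Rlt_0_1). intros y Hy. apply Hy. }
  generalize (filter_and _ _ Hp Hl). apply filter_imp.
  intros u [H1 H2]. simpl in H1.
  assert (Tu : Rabs (Series (fun n => f n u) - sum_f_R0 (fun n => f n u) N) <= C * r ^ S N / (1 - r)).
  { apply (tail_bound (fun n => f n u) C r Hr). intro n. apply HC.
    pose proof (Rabs_triang_inv u x). lra. }
  assert (Tx : Rabs (Series (fun n => f n x) - sum_f_R0 (fun n => f n x) N) <= C * r ^ S N / (1 - r)).
  { apply (tail_bound (fun n => f n x) C r Hr). intro n. apply HC. lra. }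
  set (a := Series (fun n => f n u)) in *. set (b := Series (fun n => f n x)) in *.
  set (c := sum_f_R0 (fun n => f n u) N) in *. set (d := sum_f_R0 (fun n => f n x) N) in *.
  replace (a - b) with ((a - c) + (c - d) + - (b - d)) by ring.
  pose proof (Rabs_triang ((a - c) + (c - d)) (- (b - d))).
  pose proof (Rabs_triang (a - c) (c - d)).
  rewrite Rabs_Ropp in *. simpl. lra.
Qed.

Lemma cont_ex_RInt (f : R -> R) a b : (forall x, continuity_pt f x) -> ex_RInt f a b.
Proof.
  intros H. apply (@ex_RInt_continuous R_CompleteNormedModule). intros z _.
  apply continuity_pt_filterlim. apply H.
Qed.

Lemma RInt_plusR (f g : R -> R) a b : ex_RInt f a b -> ex_RInt g a b ->
  RInt (fun x => f x + g x) a b = RInt f a b + RInt g a b.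
Proof. intros Hf Hg. exact (RInt_plus f g a b Hf Hg). Qed.

Lemma RInt_minusR (f g : R -> R) a b : ex_RInt f a b -> ex_RInt g a b ->
  RInt (fun x => f x - g x) a b = RInt f a b - RInt g a b.
Proof. intros Hf Hg. exact (RInt_minus f g a b Hf Hg). Qed.

Lemma RInt_scalR (f : R -> R) c a b : ex_RInt f a b ->
  RInt (fun x => c * f x) a b = c * RInt f a b.
Proof. intros Hf. exact (RInt_scal f a b c Hf). Qed.

Lemma ex_RInt_plusR (f g : R -> R) a b : ex_RInt f a b -> ex_RInt g a b ->
  ex_RInt (fun x => f x + g x) a b.
Proof. intros Hf Hg. exact (ex_RInt_plus f g a b Hf Hg). Qed.

Lemma ex_RInt_scalR (f : R -> R) c a b : ex_RInt f a b ->
  ex_RInt (fun x => c * f x) a b.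
Proof. intros Hf. exact (ex_RInt_scal f a b c Hf). Qed.

Lemma RInt_psum (f : nat -> R -> R) a b N :
  (forall n x, continuity_pt (f n) x) ->
  RInt (fun x => sum_f_R0 (fun n => f n x) N) a b = sum_f_R0 (fun n => RInt (f n) a b) N.
Proof.
  intros Hc. induction N as [|N IH]; simpl.
  - reflexivity.
  - rewrite RInt_plusR. rewrite IH. reflexivity.
    apply cont_ex_RInt. intro x. apply psum_cont. intros n; apply Hc.
    apply cont_ex_RInt. apply Hc.
Qed.

Lemma useries_int f r a b : 0 < r < 1 -> (forall n x, continuity_pt (f n) x) -> UBound f r ->
  a <= b ->
  is_series (fun n => RInt (f n) a b) (RInt (fun u => Series (fun n => f n u)) a b).
Proof.
  intros Hr Hc Hb Hab.
  assert (HX : 0 <= Rmax (Rabs a) (Rabs b)) by (pose proof (Rabs_pos a); pose proof (Rmax_l (Rabs a) (Rabs b)); lra).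
  destruct (Hb _ HX) as [C HC].
  apply is_series_Reals. intros eps Heps.
  destruct (tail_small C r (eps / (b - a + 1)) Hr) as [N HN].
  { apply Rdiv_lt_0_compat; lra. }
  exists N. intros n Hn. unfold Rdist.
  rewrite <- RInt_psum by auto.
  rewrite <- RInt_minusR.
  2: { apply cont_ex_RInt. intro x. apply psum_cont. intros; apply Hc. }
  2: { apply cont_ex_RInt. intro x. apply (useries_cont f r); auto. }
  eapply Rle_lt_trans. apply abs_RInt_le_const with (M := C * r ^ S n / (1 - r)); auto.
  { apply cont_ex_RInt; intro x. apply continuity_pt_minus.
    apply psum_cont. intros; apply Hc. apply (useries_cont f r); auto. }
  { intros t Ht. rewrite <- Rabs_Ropp, Ropp_minus_distr.
    apply (tail_bound (fun k => f k t) C r Hr). intro k. apply HC.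
    unfold Rabs at 1; destruct (Rcase_abs t);
    pose proof (Rmax_l (Rabs a) (Rabs b)); pose proof (Rmax_r (Rabs a) (Rabs b));
    pose proof (Rle_abs a); pose proof (Rle_abs b);
    pose proof (Rabs_Ropp a); pose proof (Rle_abs (-a)); pose proof (Rle_abs (-b)); rewrite Rabs_Ropp in *; lra. }
  specialize (HN n Hn).
  assert (0 <= C * r ^ S n / (1 - r)).
  { eapply Rle_trans. apply Rabs_pos. apply (tail_bound (fun k => f k a) C r Hr).
    intro k. apply HC. pose proof (Rmax_l (Rabs a) (Rabs b)). lra. }
  apply Rmult_lt_compat_r with (r := b - a + 1) in HN; [|lra].
  replace (eps / (b - a + 1) * (b - a + 1)) with eps in HN by (field; lra). nra.
Qed.

Lemma RInt_extR (f g : R -> R) a b : (forall x, Rmin a b < x < Rmax a b -> f x = g x) ->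
  RInt f a b = RInt g a b.
Proof. intros H. exact (RInt_ext f g a b H). Qed.

Lemma RInt_swapR (f : R -> R) a b : ex_RInt f a b -> RInt f b a = - RInt f a b.
Proof. intros H. symmetry. exact (opp_RInt_swap f a b H). Qed.

Lemma RInt_ChaslesR (f : R -> R) a b c : ex_RInt f a b -> ex_RInt f b c ->
  RInt f a b + RInt f b c = RInt f a c.
Proof. intros H1 H2. exact (RInt_Chasles f a b c H1 H2). Qed.

Lemma RInt_shiftR (f : R -> R) a b v : (forall x, continuity_pt f x) ->
  RInt (fun y => f (y + v)) a b = RInt f (a + v) (b + v).
Proof.
  intros Hc. assert (H := RInt_comp_lin f 1 v a b).
  replace (1 * a + v) with (a + v) in H by ring.
  replace (1 * b + v) with (b + v) in H by ring.
  rewrite <- H. 2: apply cont_ex_RInt; auto.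
  apply RInt_extR. intros x _. simpl. unfold scal; simpl; unfold mult; simpl.
  rewrite Rmult_1_l. f_equal. ring.
Qed.

Lemma RInt_odd (f : R -> R) N : (forall x, continuity_pt f x) -> (forall x, f (- x) = - f x) ->
  RInt f (- N) N = 0.
Proof.
  intros Hc Ho. assert (H := RInt_comp_lin f (-1) 0 (- N) N).
  replace (-1 * - N + 0) with N in H by ring.
  replace (-1 * N + 0) with (- N) in H by ring.
  specialize (H (cont_ex_RInt f _ _ Hc)).
  rewrite (RInt_extR _ f) in H.
  2: { intros x _. unfold scal; simpl; unfold mult; simpl.
       replace (-1 * x + 0) with (- x) by ring. rewrite Ho. ring. }
  assert (E : RInt f N (- N) = - RInt f (- N) N) by (apply RInt_swapR, cont_ex_RInt; auto).
  change (RInt f (- N) N = RInt f N (- N)) in H. lra.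
Qed.

Lemma is_series_lim (a : nat -> R) l : is_series a l -> is_lim_seq (fun N => sum_f_R0 a N) l.
Proof.
  intros H. apply is_lim_seq_ext with (sum_n a). intro n. apply sum_n_Reals.
  exact H.
Qed.

Lemma exp_pow_INR a n : exp (INR n * a) = exp a ^ n.
Proof.
  induction n as [|n IH]. simpl. rewrite Rmult_0_l. apply exp_0.
  rewrite S_INR, Rmult_plus_distr_r, exp_plus, IH, Rmult_1_l. simpl. ring.
Qed.

Lemma exp_le x y : x <= y -> exp x <= exp y.
Proof. intros [H|H]. left; apply exp_increasing; auto. subst; lra. Qed.

Ltac cpt := match goal with |- continuity_pt ?f ?x =>
  apply (proj2 (continuity_pt_filterlim f x));
  apply (@ex_derive_continuous R_AbsRing R_NormedModule f x); auto_derive; auto end.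

Definition J (A N w : R) := RInt (fun u => exp (- (A * (u * u))) * cos (w * u)) (- N) N.

Lemma cont2_deriv (A : R) x t :
  continuity_2d_pt (fun u v => exp (- (A * (v * v))) * (- sin (u * v) * v)) x t.
Proof.
  apply continuity_2d_pt_mult.
  - apply (continuity_1d_2d_pt_comp exp (fun u v => - (A * (v * v)))).
    cpt. apply continuity_2d_pt_opp, continuity_2d_pt_mult.
    apply continuity_2d_pt_const. apply continuity_2d_pt_mult; apply continuity_2d_pt_id2.
  - apply continuity_2d_pt_mult. 2: apply continuity_2d_pt_id2.
    apply continuity_2d_pt_opp.
    apply (continuity_1d_2d_pt_comp sin (fun u v => u * v)).
    cpt. apply continuity_2d_pt_mult. apply continuity_2d_pt_id1. apply continuity_2d_pt_id2.
Qed.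

Lemma J_derive A N w :
  is_derive (J A N) w (RInt (fun t => exp (- (A * (t * t))) * (- sin (w * t) * t)) (- N) N).
Proof.
  unfold J.
  assert (HD : forall u t, Derive (fun z => exp (- (A * (t * t))) * cos (z * t)) u
                          = exp (- (A * (t * t))) * (- sin (u * t) * t)).
  { intros u t. apply is_derive_unique. auto_derive; auto. ring. }
  assert (H := is_derive_RInt_param (fun z t => exp (- (A * (t * t))) * cos (z * t)) (- N) N w).
  rewrite (RInt_ext _ (fun t => exp (- (A * (t * t))) * (- sin (w * t) * t))) in H.
  2: { intros; apply HD. }
  apply H.
  - exists (mkposreal 1 Rlt_0_1). intros y _ t _. auto_derive; auto.
  - intros t _. eapply continuity_2d_pt_ext. 2: apply (cont2_deriv A w t).
    intros; simpl. rewrite HD. reflexivity.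
  - exists (mkposreal 1 Rlt_0_1). intros y _. apply cont_ex_RInt. intro x. cpt.
Qed.

Lemma J_deriv_val A N w : A <> 0 ->
  RInt (fun t => exp (- (A * (t * t))) * (- sin (w * t) * t)) (- N) N
  = (2 * exp (- (A * (N * N))) * sin (w * N) - w * J A N w) / (2 * A).
Proof.
  intros HA.
  set (P := fun t => exp (- (A * (t * t))) * sin (w * t)).
  set (dP := fun t => exp (- (A * (t * t))) * (- (2 * A * t)) * sin (w * t)
                      + exp (- (A * (t * t))) * (cos (w * t) * w)).
  assert (HP : RInt dP (- N) N = P N - P (- N)).
  { apply is_RInt_unique. apply (is_RInt_derive P dP).
    - intros x _. unfold P, dP. auto_derive; auto. ring.
    - intros x _. unfold dP.
      apply (@ex_derive_continuous R_AbsRing R_NormedModule). auto_derive; auto. }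
  rewrite (RInt_extR _ (fun t => / (2 * A) * (dP t - w * (exp (- (A * (t * t))) * cos (w * t))))).
  2: { intros x _. unfold dP. field. auto. }
  rewrite RInt_scalR, RInt_minusR, RInt_scalR, HP.
  - unfold J, P. replace (w * - N) with (- (w * N)) by ring. rewrite sin_neg.
    replace (- N * - N) with (N * N) by ring. match goal with |- ?a = ?b => change (@eq R a b) end. field. auto.
  - apply cont_ex_RInt. intro; cpt.
  - apply cont_ex_RInt. intro; unfold dP; cpt.
  - apply ex_RInt_scalR. apply cont_ex_RInt. intro; cpt.
  - apply cont_ex_RInt. intro; unfold dP. cpt.
Qed.

Lemma is_derive_val (f : R -> R) x l l' : is_derive f x l -> l = l' -> is_derive f x l'.
Proof. intros H ->. exact H. Qed.

Ltac reqR := match goal with |- ?a = ?b => change (@eq R a b) end.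

Lemma J_gauss_bound A N w : 0 < A ->
  Rabs (exp (w * w / (4 * A)) * J A N w - J A N 0)
  <= Rabs w * exp (w * w / (4 * A)) * exp (- (A * (N * N))) / A.
Proof.
  intros HA.
  set (K := fun w => exp (w * w / (4 * A)) * J A N w).
  set (dK := fun c => exp (c * c / (4 * A)) * exp (- (A * (N * N))) * sin (c * N) / A).
  assert (HdK : forall c, is_derive K c (dK c)).
  { intro c. unfold K.
    assert (H1 := J_derive A N c). rewrite J_deriv_val in H1 by lra.
    assert (H2 : is_derive (fun w => exp (w * w / (4 * A))) c (exp (c * c / (4 * A)) * (2 * c / (4 * A)))).
    { auto_derive. exact I. unfold Rdiv; ring. }
    assert (H := is_derive_mult _ _ c _ _ H2 H1 Rmult_comm).
    eapply is_derive_ext. 2: eapply is_derive_val. 2: exact H. intros; reflexivity.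
    unfold dK. unfold plus, mult; simpl. reqR. field. lra. }
  destruct (MVT_gen K 0 w dK) as [c [Hc Heq]].
  { intros x _. apply HdK. }
  { intros x _. apply continuity_pt_filterlim. apply (@ex_derive_continuous R_AbsRing R_NormedModule).
    exists (dK x). apply HdK. }
  unfold K in Heq. replace (0 * 0 / (4 * A)) with 0 in Heq by (field; lra).
  rewrite exp_0, Rmult_1_l in Heq. rewrite Heq.
  rewrite Rminus_0_r, Rabs_mult. unfold dK.
  assert (Hcw : c * c <= w * w).
  { revert Hc. unfold Rmin, Rmax. destruct (Rle_dec 0 w); intros; nra. }
  assert (He : exp (c * c / (4 * A)) <= exp (w * w / (4 * A))).
  { destruct (Req_dec (c * c) (w * w)) as [E|E]. rewrite E; lra.
    left. apply exp_increasing. apply Rmult_lt_compat_r. apply Rinv_0_lt_compat; lra. lra. }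
  assert (Hx : 0 < exp (- (A * (N * N)))) by apply exp_pos.
  assert (Hy : 0 < exp (c * c / (4 * A))) by apply exp_pos.
  set (X := exp (c * c / (4 * A)) * exp (- (A * (N * N)))).
  set (Y := exp (w * w / (4 * A)) * exp (- (A * (N * N)))).
  assert (HXY : X <= Y) by (unfold X, Y; apply Rmult_le_compat_r; lra).
  assert (HX0 : 0 < X) by (unfold X; apply Rmult_lt_0_compat; lra).
  assert (HXA : 0 < X / A) by (apply Rdiv_lt_0_compat; lra).
  assert (Hs := SIN_bound (c * N)).
  assert (Rabs (X * sin (c * N) / A) <= X / A).
  { apply Rabs_le. replace (X * sin (c * N) / A) with (X / A * sin (c * N)) by (field; lra).
    split; nra. }
  pose proof (Rabs_pos w).
  apply Rle_trans with (X / A * Rabs w). nra.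
  replace (Rabs w * exp (w * w / (4 * A)) * exp (- (A * (N * N))) / A) with (Y / A * Rabs w)
    by (unfold Y; field; lra).
  apply Rmult_le_compat_r. lra. unfold Rdiv. apply Rmult_le_compat_r.
  left; apply Rinv_0_lt_compat; lra. lra.
Qed.

Definition G (A u : R) := exp (- (A * (u * u))).
Definition Fp A x := Series (fun n => G A (INR n + x)).
Definition Fm A x := Series (fun n => G A (x - INR n - 1)).
Definition FF A x := Fp A x + Fm A x.

Lemma G_lin A t : 0 < A -> G A t <= exp A * exp (- (2 * A * t)).
Proof.
  intros HA. unfold G. rewrite <- exp_plus. apply exp_le.
  assert (H := Rmult_le_pos A ((t-1)*(t-1)) (Rlt_le _ _ HA) (Rle_0_sqr (t-1))). lra.
Qed.

Lemma G_pos A t : 0 < G A t.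
Proof. apply exp_pos. Qed.

Lemma G_cont A x : continuity_pt (G A) x.
Proof. unfold G. cpt. Qed.

Lemma UB_p A (phi : R -> R) : 0 < A -> (forall x, Rabs (phi x) <= 1) ->
  UBound (fun n x => G A (INR n + x) * phi x) (exp (- (2 * A))).
Proof.
  intros HA Hphi X HX. exists (exp A * exp (2 * A * X)). intros n x Hx.
  rewrite Rabs_mult. rewrite (Rabs_pos_eq (G A _)) by (left; apply G_pos).
  pose proof (G_pos A (INR n + x)). pose proof (Rabs_pos (phi x)). specialize (Hphi x).
  apply Rle_trans with (G A (INR n + x)). nra.
  eapply Rle_trans. apply G_lin; auto.
  rewrite <- exp_pow_INR, Rmult_assoc, <- !exp_plus. apply exp_le.
  apply Rabs_le_between in Hx. nra.
Qed.

Lemma UB_m A (phi : R -> R) : 0 < A -> (forall x, Rabs (phi x) <= 1) ->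
  UBound (fun n x => G A (x - INR n - 1) * phi x) (exp (- (2 * A))).
Proof.
  intros HA Hphi X HX. exists (exp A * exp (2 * A * X)). intros n x Hx.
  rewrite Rabs_mult. rewrite (Rabs_pos_eq (G A _)) by (left; apply G_pos).
  pose proof (G_pos A (x - INR n - 1)). pose proof (Rabs_pos (phi x)). specialize (Hphi x).
  apply Rle_trans with (G A (x - INR n - 1)). nra.
  replace (G A (x - INR n - 1)) with (G A (INR n + 1 - x)) by (unfold G; f_equal; ring).
  eapply Rle_trans. apply G_lin; auto.
  rewrite <- exp_pow_INR, Rmult_assoc, <- !exp_plus. apply exp_le.
  apply Rabs_le_between in Hx. pose proof (pos_INR n). nra.
Qed.

Lemma r_ok A : 0 < A -> 0 < exp (- (2 * A)) < 1.
Proof.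
  intros HA. split. apply exp_pos. rewrite <- exp_0. apply exp_increasing. lra.
Qed.

Section Coef.
Variable A : R.
Hypothesis HA : 0 < A.
Variable phi : R -> R.
Hypothesis Hphi_c : forall x, continuity_pt phi x.
Hypothesis Hphi_b : forall x, Rabs (phi x) <= 1.
Hypothesis Hphi_p : forall x n, phi (x + INR n) = phi x.

Let fp := fun n x => G A (INR n + x) * phi x.
Let fm := fun n x => G A (x - INR n - 1) * phi x.

Lemma fp_c n x : continuity_pt (fp n) x.
Proof. unfold fp. apply continuity_pt_mult; auto. 
  apply (continuity_pt_comp (fun x => INR n + x) (G A)). cpt. apply G_cont. Qed.
Lemma fm_c n x : continuity_pt (fm n) x.
Proof. unfold fm. apply continuity_pt_mult; auto.
  apply (continuity_pt_comp (fun x => x - INR n - 1) (G A)). cpt. apply G_cont. Qed.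

Lemma Gphi_c x : continuity_pt (fun u => G A u * phi u) x.
Proof. apply continuity_pt_mult; auto. apply G_cont. Qed.

Lemma FF_phi_series : forall x, FF A x * phi x =
  Series (fun n => fp n x) + Series (fun n => fm n x).
Proof.
  intro x. unfold FF, Fp, Fm, fp, fm. rewrite !Series_scal_r. ring.
Qed.

Lemma a_val n : RInt (fp n) 0 1 = RInt (fun u => G A u * phi u) (INR n) (INR n + 1).
Proof.
  rewrite <- (Rplus_0_l (INR n)) at 1. rewrite (Rplus_comm (INR n) 1).
  rewrite <- RInt_shiftR by apply Gphi_c.
  apply RInt_extR. intros x _. unfold fp. rewrite Hphi_p. f_equal. f_equal. ring.
Qed.

Lemma phi_m x n : phi (x - INR n - 1) = phi x.
Proof.
  rewrite <- (Hphi_p (x - INR n - 1) (S n)), S_INR. f_equal. ring.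
Qed.

Lemma b_val n : RInt (fm n) 0 1 = RInt (fun u => G A u * phi u) (- INR n - 1) (- INR n).
Proof.
  replace (- INR n - 1) with (0 + (- INR n - 1)) by ring.
  replace (- INR n) with (1 + (- INR n - 1)) at 2 by ring.
  rewrite <- RInt_shiftR by apply Gphi_c.
  apply RInt_extR. intros x _. unfold fm.
  replace (x + (- INR n - 1)) with (x - INR n - 1) by ring. rewrite phi_m. reflexivity.
Qed.

Lemma ab_sum N : sum_f_R0 (fun n => RInt (fp n) 0 1 + RInt (fm n) 0 1) N
  = RInt (fun u => G A u * phi u) (- (INR N + 1)) (INR N + 1).
Proof.
  assert (Hex : forall a b, ex_RInt (fun u => G A u * phi u) a b) by (intros; apply cont_ex_RInt, Gphi_c).
  induction N as [|N IH]; simpl sum_f_R0.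
  - rewrite a_val, b_val. simpl INR. rewrite Rplus_0_l.
    replace (- 0 - 1) with (- (0 + 1)) by ring. replace (- 0) with 0 by ring.
    replace (- (0 + 1)) with (- (1)) by ring. rewrite Rplus_comm. apply RInt_ChaslesR; auto.
  - rewrite IH, a_val, b_val, S_INR.
    replace (- (INR N + 1 + 1)) with (- INR N - 1 - 1) by ring.
    replace (- (INR N + 1)) with (- INR N - 1) by ring.
    rewrite <- (RInt_ChaslesR _ (- INR N - 1 - 1) (- INR N - 1) (INR N + 1 + 1)) by auto.
    rewrite <- (RInt_ChaslesR _ (- INR N - 1) (INR N + 1) (INR N + 1 + 1)) by auto.
    replace (- (INR N + 1) - 1) with (- INR N - 1 - 1) by ring.
    replace (- (INR N + 1)) with (- INR N - 1) by ring. ring.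
Qed.

Lemma coef_lim : is_lim_seq (fun N => RInt (fun u => G A u * phi u) (- (INR N + 1)) (INR N + 1))
  (RInt (fun x => FF A x * phi x) 0 1).
Proof.
  eapply is_lim_seq_ext. intro N. apply ab_sum.
  apply is_series_lim.
  rewrite (RInt_extR _ (fun x => Series (fun n => fp n x) + Series (fun n => fm n x))).
  2: { intros; apply FF_phi_series. }
  rewrite RInt_plusR.
  - apply (is_series_plus (V := R_NormedModule)).
    + apply (useries_int fp (exp (- (2 * A)))). apply r_ok; auto. apply fp_c. apply UB_p; auto. lra.
    + apply (useries_int fm (exp (- (2 * A)))). apply r_ok; auto. apply fm_c. apply UB_m; auto. lra.
  - apply cont_ex_RInt. apply (useries_cont fp (exp (- (2 * A)))). apply r_ok; auto. apply fp_c. apply UB_p; auto.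
  - apply cont_ex_RInt. apply (useries_cont fm (exp (- (2 * A)))). apply r_ok; auto. apply fm_c. apply UB_m; auto.
Qed.

End Coef.

Lemma lim_uniq (u : nat -> R) (a b : R) : is_lim_seq u a -> is_lim_seq u b -> a = b.
Proof.
  intros H1 H2. apply is_lim_seq_unique in H1. apply is_lim_seq_unique in H2.
  rewrite H1 in H2. injection H2. auto.
Qed.

Lemma alg_aux (L I E e : R) : E * e = 1 -> E * L - I = 0 -> L = e * I.
Proof. intros H1 H2. replace I with (E * L) by lra.
  rewrite <- Rmult_assoc, (Rmult_comm e E), H1. ring. Qed.

Definition IF A := RInt (fun x => FF A x) 0 1.

Lemma cos_per k x n : cos (2 * PI * INR k * (x + INR n)) = cos (2 * PI * INR k * x).
Proof.
  rewrite <- (cos_period (2 * PI * INR k * x) (k * n)). f_equal. rewrite mult_INR. ring.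
Qed.

Lemma sin_per k x n : sin (2 * PI * INR k * (x + INR n)) = sin (2 * PI * INR k * x).
Proof.
  rewrite <- (sin_period (2 * PI * INR k * x) (k * n)). f_equal. rewrite mult_INR. ring.
Qed.

Lemma coef_J A w : 0 < A -> (forall x n, cos (w * (x + INR n)) = cos (w * x)) ->
  is_lim_seq (fun N => J A (INR N + 1) w) (RInt (fun x => FF A x * cos (w * x)) 0 1).
Proof.
  intros HA Hp. apply (coef_lim A HA (fun x => cos (w * x))).
  - intros; cpt.
  - intros; apply Rabs_le, COS_bound.
  - intros; apply Hp.
Qed.

Lemma expA_pow_bound A N : 0 < A -> exp (- (A * ((INR N + 1) * (INR N + 1)))) <= exp (- A) ^ N.
Proof.
  intros HA. rewrite <- exp_pow_INR. apply exp_le. pose proof (pos_INR N). nra.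
Qed.

Lemma coefF_cos_gen A w : 0 < A -> (forall x n, cos (w * (x + INR n)) = cos (w * x)) ->
  RInt (fun x => FF A x * cos (w * x)) 0 1 = exp (- (w * w / (4 * A))) * IF A.
Proof.
  intros HA Hp.
  assert (H0 : IF A = RInt (fun x => FF A x * cos (0 * x)) 0 1).
  { unfold IF. apply RInt_extR. intros. rewrite Rmult_0_l, cos_0. ring. }
  assert (Hw := coef_J A w HA Hp).
  assert (Hz := coef_J A 0 HA ltac:(intros; rewrite !Rmult_0_l; reflexivity)).
  rewrite <- H0 in Hz.
  set (E := exp (w * w / (4 * A))).
  assert (H1 := is_lim_seq_minus' _ _ _ _ (is_lim_seq_scal_l _ E _ Hw) Hz). simpl in H1.
  assert (H2 : is_lim_seq (fun N => E * J A (INR N + 1) w - J A (INR N + 1) 0) 0).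
  { apply is_lim_seq_le_le with (u := fun N => - (Rabs w * E / A * exp (- A) ^ N))
                               (w := fun N => Rabs w * E / A * exp (- A) ^ N).
    - intro N.
      assert (B := J_gauss_bound A (INR N + 1) w HA). fold E in B.
      assert (B2 := expA_pow_bound A N HA).
      assert (0 <= Rabs w * E / A).
      { apply Rmult_le_pos. apply Rmult_le_pos. apply Rabs_pos. left; apply exp_pos.
        left; apply Rinv_0_lt_compat; lra. }
      apply Rabs_le_between in B.
      replace (Rabs w * E * exp (- (A * ((INR N + 1) * (INR N + 1)))) / A)
        with (Rabs w * E / A * exp (- (A * ((INR N + 1) * (INR N + 1))))) in B by (field; lra).
      split; nra.
    - replace 0 with (- 0) by ring. apply (is_lim_seq_opp _ (Finite 0)).
      replace (Finite 0) with (Rbar_mult (Rabs w * E / A) 0) by (simpl; f_equal; ring).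
      apply is_lim_seq_scal_l. apply is_lim_seq_geom.
      rewrite Rabs_pos_eq. rewrite <- exp_0. apply exp_increasing. lra. left; apply exp_pos.
    - replace (Finite 0) with (Rbar_mult (Rabs w * E / A) 0) by (simpl; f_equal; ring).
      apply is_lim_seq_scal_l. apply is_lim_seq_geom.
      rewrite Rabs_pos_eq. rewrite <- exp_0. apply exp_increasing. lra. left; apply exp_pos. }
  assert (H3 := lim_uniq _ _ _ H1 H2).
  assert (HE : E * exp (- (w * w / (4 * A))) = 1).
  { unfold E. rewrite <- exp_plus. rewrite <- exp_0. f_equal. ring. }
  exact (alg_aux _ _ _ _ HE H3).
Qed.

Lemma coefF_cos A k : 0 < A ->
  RInt (fun x => FF A x * cos (2 * PI * INR k * x)) 0 1 = exp (- (PI ^ 2 * INR k ^ 2 / A)) * IF A.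
Proof.
  intros HA. rewrite coefF_cos_gen; auto.
  f_equal. f_equal. f_equal. field. lra.
  intros; apply cos_per.
Qed.

Lemma coefF_sin A k : 0 < A ->
  RInt (fun x => FF A x * sin (2 * PI * INR k * x)) 0 1 = 0.
Proof.
  intros HA. set (w := 2 * PI * INR k).
  assert (H := coef_lim A HA (fun x => sin (w * x))).
  eapply lim_uniq. apply H.
  - intros; cpt.
  - intros; apply Rabs_le, SIN_bound.
  - intros; apply sin_per.
  - eapply is_lim_seq_ext. 2: apply is_lim_seq_const.
    intro N. simpl. symmetry. apply RInt_odd.
    + intro x. apply continuity_pt_mult. apply G_cont. cpt.
    + intro x. unfold G. replace (w * - x) with (- (w * x)) by ring. rewrite sin_neg.
      replace (- x * - x) with (x * x) by ring. ring.
Qed.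

Lemma sin_2PIZ (z : Z) : sin (2 * PI * IZR z) = 0.
Proof. apply sin_eq_0_1. exists (2 * z)%Z. rewrite mult_IZR. simpl. ring. Qed.

Lemma cos_2PIZ (z : Z) : cos (2 * PI * IZR z) = 1.
Proof.
  replace (2 * PI * IZR z) with (2 * (IZR z * PI)) by ring. rewrite cos_2a_sin.
  rewrite sin_eq_0_1. ring. exists z; reflexivity.
Qed.

Lemma int_cos (z : Z) : RInt (fun x => cos (2 * PI * IZR z * x)) 0 1 = if Z.eq_dec z 0 then 1 else 0.
Proof.
  destruct (Z.eq_dec z 0) as [->|Hz].
  - rewrite (RInt_extR _ (fun _ => 1)). rewrite RInt_const. unfold scal; simpl; unfold mult; simpl. ring.
    intros. simpl. rewrite Rmult_0_r, Rmult_0_l. apply cos_0.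
  - assert (Hz' : IZR z <> 0) by (apply not_0_IZR; auto).
    assert (HP := PI_RGT_0).
    erewrite is_RInt_unique. 2: apply (is_RInt_derive (fun x => sin (2 * PI * IZR z * x) / (2 * PI * IZR z))).
    + rewrite Rmult_1_r, Rmult_0_r, sin_0, sin_2PIZ. unfold minus, plus, opp; simpl. field. split; lra.
    + intros x _. auto_derive. auto. field. split; lra.
    + intros x _. apply (@ex_derive_continuous R_AbsRing R_NormedModule). auto_derive. auto.
Qed.

Lemma int_sin (z : Z) : RInt (fun x => sin (2 * PI * IZR z * x)) 0 1 = 0.
Proof.
  destruct (Z.eq_dec z 0) as [->|Hz].
  - rewrite (RInt_extR _ (fun _ => 0)). rewrite RInt_const. unfold scal; simpl; unfold mult; simpl. ring.
    intros. simpl. rewrite Rmult_0_r, Rmult_0_l. apply sin_0.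
  - assert (Hz' : IZR z <> 0) by (apply not_0_IZR; auto).
    assert (HP := PI_RGT_0).
    erewrite is_RInt_unique. 2: apply (is_RInt_derive (fun x => - cos (2 * PI * IZR z * x) / (2 * PI * IZR z))).
    + rewrite Rmult_1_r, Rmult_0_r, cos_0, cos_2PIZ. unfold minus, plus, opp; simpl. field. split; lra.
    + intros x _. auto_derive. auto. field. split; lra.
    + intros x _. apply (@ex_derive_continuous R_AbsRing R_NormedModule). auto_derive. auto.
Qed.

Lemma IZR_diff n j : IZR (Z.of_nat n - Z.of_nat j) = INR n - INR j.
Proof. rewrite minus_IZR, <- !INR_IZR_INZ. reflexivity. Qed.
Lemma IZR_sum n j : IZR (Z.of_nat n + Z.of_nat j) = INR n + INR j.
Proof. rewrite plus_IZR, <- !INR_IZR_INZ. reflexivity. Qed.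

Lemma cont_cos_lin a x : continuity_pt (fun x => cos (a * x)) x.
Proof. cpt. Qed.
Lemma cont_sin_lin a x : continuity_pt (fun x => sin (a * x)) x.
Proof. cpt. Qed.

Lemma cc_val n j : RInt (fun x => cos (2 * PI * INR n * x) * cos (2 * PI * INR j * x)) 0 1
  = (if Nat.eq_dec n j then 1/2 else 0) + (if Nat.eq_dec (n + j) 0 then 1/2 else 0).
Proof.
  rewrite (RInt_extR _ (fun x => / 2 * cos (2 * PI * IZR (Z.of_nat n - Z.of_nat j) * x)
                              + / 2 * cos (2 * PI * IZR (Z.of_nat n + Z.of_nat j) * x))).
  2: { intros x _. rewrite IZR_diff, IZR_sum.
       replace (2 * PI * (INR n - INR j) * x) with (2 * PI * INR n * x - 2 * PI * INR j * x) by ring.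
       replace (2 * PI * (INR n + INR j) * x) with (2 * PI * INR n * x + 2 * PI * INR j * x) by ring.
       rewrite cos_minus, cos_plus. field. }
  rewrite RInt_plusR, !RInt_scalR, !int_cos; [reqR| | | |].
  - destruct (Z.eq_dec (Z.of_nat n - Z.of_nat j) 0); destruct (Nat.eq_dec n j);
    destruct (Z.eq_dec (Z.of_nat n + Z.of_nat j) 0); destruct (Nat.eq_dec (n + j) 0);
    try lia; field.
  - apply cont_ex_RInt; intro; apply cont_cos_lin.
  - apply cont_ex_RInt; intro; apply cont_cos_lin.
  - apply ex_RInt_scalR, cont_ex_RInt; intro; apply cont_cos_lin.
  - apply ex_RInt_scalR, cont_ex_RInt; intro; apply cont_cos_lin.
Qed.

Lemma cs_val n j : RInt (fun x => cos (2 * PI * INR n * x) * sin (2 * PI * INR j * x)) 0 1 = 0.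
Proof.
  rewrite (RInt_extR _ (fun x => / 2 * sin (2 * PI * IZR (Z.of_nat n + Z.of_nat j) * x)
                              - / 2 * sin (2 * PI * IZR (Z.of_nat n - Z.of_nat j) * x))).
  2: { intros x _. rewrite IZR_diff, IZR_sum.
       replace (2 * PI * (INR n - INR j) * x) with (2 * PI * INR n * x - 2 * PI * INR j * x) by ring.
       replace (2 * PI * (INR n + INR j) * x) with (2 * PI * INR n * x + 2 * PI * INR j * x) by ring.
       rewrite sin_minus, sin_plus. field. }
  rewrite RInt_minusR, !RInt_scalR, !int_sin; [reqR; ring| | | |].
  - apply cont_ex_RInt; intro; apply cont_sin_lin.
  - apply cont_ex_RInt; intro; apply cont_sin_lin.
  - apply ex_RInt_scalR, cont_ex_RInt; intro; apply cont_sin_lin.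
  - apply ex_RInt_scalR, cont_ex_RInt; intro; apply cont_sin_lin.
Qed.

Lemma Series_single (a : nat -> R) j : (forall n, n <> j -> a n = 0) -> Series a = a j.
Proof.
  intros H. apply is_series_unique. apply is_series_Reals. intros eps Heps.
  exists j. intros N HN. unfold Rdist.
  assert (E : forall N, sum_f_R0 a N = if le_dec j N then a j else 0).
  { induction N0 as [|N0 IH]; simpl.
    - destruct (le_dec j 0). assert (j = 0)%nat by lia. subst; auto. apply H. lia.
    - rewrite IH. destruct (le_dec j N0); destruct (le_dec j (S N0)); try lia.
      rewrite (H (S N0)) by lia. ring. assert (j = S N0) by lia. subst. ring. rewrite (H (S N0)) by lia. ring. }
  rewrite E. destruct (le_dec j N); try lia. rewrite Rminus_diag, Rabs_R0. lra.
Qed.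

Definition hk A n := exp (- (PI ^ 2 * INR n ^ 2 / A)).
Definition Hp A x := Series (fun n => hk A n * cos (2 * PI * INR n * x)).
Definition Hm A x := Series (fun n => hk A (S n) * cos (2 * PI * INR (S n) * x)).
Definition HH A x := Hp A x + Hm A x.

Lemma hk_bound A n : 0 < A -> hk A n <= exp (PI ^ 2 / A) * exp (- (2 * PI ^ 2 / A)) ^ n.
Proof.
  intros HA. unfold hk. rewrite <- exp_pow_INR, <- exp_plus. apply exp_le.
  assert (HP : 0 < PI ^ 2 / A) by (apply Rdiv_lt_0_compat; [apply pow_lt, PI_RGT_0 | lra]).
  assert (H := Rmult_le_pos (PI ^ 2 / A) ((INR n - 1) * (INR n - 1)) (Rlt_le _ _ HP) (Rle_0_sqr _)).
  replace (PI ^ 2 * INR n ^ 2 / A) with (PI ^ 2 / A * (INR n * INR n)) by (field; lra).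
  replace (INR n * - (2 * PI ^ 2 / A)) with (- (2 * (PI ^ 2 / A) * INR n)) by (field; lra).
  nra.
Qed.

Lemma hk_S A n : 0 < A -> hk A (S n) <= hk A n.
Proof.
  intros HA. unfold hk. apply exp_le. rewrite S_INR. apply Ropp_le_contravar.
  unfold Rdiv. apply Rmult_le_compat_r. left; apply Rinv_0_lt_compat; lra.
  apply Rmult_le_compat_l. left; apply pow_lt, PI_RGT_0. pose proof (pos_INR n). nra.
Qed.

Lemma hk_pos A n : 0 < hk A n.
Proof. apply exp_pos. Qed.

Lemma r2_ok A : 0 < A -> 0 < exp (- (2 * PI ^ 2 / A)) < 1.
Proof.
  intros HA. split. apply exp_pos. rewrite <- exp_0. apply exp_increasing.
  assert (0 < 2 * PI ^ 2 / A). apply Rdiv_lt_0_compat. assert (H := pow_lt PI 2 PI_RGT_0). lra. lra. lra.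
Qed.

Lemma UB_Hp A (psi : R -> R) : 0 < A -> (forall x, Rabs (psi x) <= 1) ->
  UBound (fun n x => hk A n * cos (2 * PI * INR n * x) * psi x) (exp (- (2 * PI ^ 2 / A))).
Proof.
  intros HA Hpsi X HX. exists (exp (PI ^ 2 / A)). intros n x Hx.
  rewrite !Rabs_mult, (Rabs_pos_eq (hk A n)) by (left; apply hk_pos).
  assert (Rabs (cos (2 * PI * INR n * x)) <= 1) by (apply Rabs_le, COS_bound).
  pose proof (Rabs_pos (cos (2 * PI * INR n * x))). pose proof (Rabs_pos (psi x)). specialize (Hpsi x).
  pose proof (hk_bound A n HA). pose proof (hk_pos A n).
  apply Rle_trans with (hk A n). 
  { rewrite Rmult_assoc. rewrite <- (Rmult_1_r (hk A n)) at 2. apply Rmult_le_compat_l. lra. nra. }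
  auto.
Qed.

Lemma UB_Hm A (psi : R -> R) : 0 < A -> (forall x, Rabs (psi x) <= 1) ->
  UBound (fun n x => hk A (S n) * cos (2 * PI * INR (S n) * x) * psi x) (exp (- (2 * PI ^ 2 / A))).
Proof.
  intros HA Hpsi X HX. exists (exp (PI ^ 2 / A)). intros n x Hx.
  rewrite !Rabs_mult, (Rabs_pos_eq (hk A (S n))) by (left; apply hk_pos).
  assert (Rabs (cos (2 * PI * INR (S n) * x)) <= 1) by (apply Rabs_le, COS_bound).
  pose proof (Rabs_pos (cos (2 * PI * INR (S n) * x))). pose proof (Rabs_pos (psi x)). specialize (Hpsi x).
  pose proof (hk_bound A n HA). pose proof (hk_pos A (S n)). pose proof (hk_S A n HA).
  apply Rle_trans with (hk A (S n)). 
  { rewrite Rmult_assoc. rewrite <- (Rmult_1_r (hk A (S n))) at 2. apply Rmult_le_compat_l. lra. nra. }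
  lra.
Qed.

Lemma UB_Hp1 A : 0 < A -> UBound (fun n x => hk A n * cos (2 * PI * INR n * x)) (exp (- (2 * PI ^ 2 / A))).
Proof.
  intros HA X HX. destruct (UB_Hp A (fun _ => 1) HA ltac:(intros; cbv beta; rewrite Rabs_R1; lra) X HX) as [C HC].
  exists C. intros n x Hx. rewrite <- (Rmult_1_r (hk A n * _)). apply HC; auto.
Qed.

Lemma UB_Hm1 A : 0 < A -> UBound (fun n x => hk A (S n) * cos (2 * PI * INR (S n) * x)) (exp (- (2 * PI ^ 2 / A))).
Proof.
  intros HA X HX. destruct (UB_Hm A (fun _ => 1) HA ltac:(intros; cbv beta; rewrite Rabs_R1; lra) X HX) as [C HC].
  exists C. intros n x Hx. rewrite <- (Rmult_1_r (hk A (S n) * _)). apply HC; auto.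
Qed.

Lemma HH_int A psi : 0 < A -> (forall x, continuity_pt psi x) -> (forall x, Rabs (psi x) <= 1) ->
  RInt (fun x => HH A x * psi x) 0 1 =
  Series (fun n => hk A n * RInt (fun x => cos (2 * PI * INR n * x) * psi x) 0 1)
  + Series (fun n => hk A (S n) * RInt (fun x => cos (2 * PI * INR (S n) * x) * psi x) 0 1).
Proof.
  intros HA Hc Hb.
  set (fp := fun n x => hk A n * cos (2 * PI * INR n * x) * psi x).
  set (fm := fun n x => hk A (S n) * cos (2 * PI * INR (S n) * x) * psi x).
  assert (Hfp : forall n x, continuity_pt (fp n) x).
  { intros. unfold fp. apply continuity_pt_mult; auto. cpt. }
  assert (Hfm : forall n x, continuity_pt (fm n) x).
  { intros. unfold fm. apply continuity_pt_mult; auto. cpt. }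
  rewrite (RInt_extR _ (fun x => Series (fun n => fp n x) + Series (fun n => fm n x))).
  2: { intros. unfold HH, Hp, Hm, fp, fm. rewrite !Series_scal_r. ring. }
  rewrite RInt_plusR.
  - f_equal.
    + rewrite <- (is_series_unique _ _ (useries_int fp _ 0 1 (r2_ok A HA) Hfp (UB_Hp A psi HA Hb) Rle_0_1)).
      apply Series_ext. intro n. unfold fp. rewrite <- RInt_scalR. apply RInt_extR. intros; ring.
      apply cont_ex_RInt. intro. apply continuity_pt_mult; auto. cpt.
    + rewrite <- (is_series_unique _ _ (useries_int fm _ 0 1 (r2_ok A HA) Hfm (UB_Hm A psi HA Hb) Rle_0_1)).
      apply Series_ext. intro n. unfold fm. rewrite <- RInt_scalR. apply RInt_extR. intros; ring.
      apply cont_ex_RInt. intro. apply continuity_pt_mult; auto. cpt.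
  - apply cont_ex_RInt. apply (useries_cont fp _ (r2_ok A HA) Hfp (UB_Hp A psi HA Hb)).
  - apply cont_ex_RInt. apply (useries_cont fm _ (r2_ok A HA) Hfm (UB_Hm A psi HA Hb)).
Qed.

Lemma coefH_cos A j : 0 < A -> RInt (fun x => HH A x * cos (2 * PI * INR j * x)) 0 1 = hk A j.
Proof.
  intros HA. rewrite HH_int; auto.
  2: intros; cpt.
  2: intros; apply Rabs_le, COS_bound.
  rewrite (Series_single _ j).
  2: { intros n Hn. rewrite cc_val. destruct (Nat.eq_dec n j); try lia.
       destruct (Nat.eq_dec (n + j) 0); try lia. ring. }
  destruct j as [|j].
  - rewrite (Series_single _ 0).
    2: { intros n _. rewrite cc_val. destruct (Nat.eq_dec (S n) 0); try lia.
         destruct (Nat.eq_dec (S n + 0) 0); try lia. ring. }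
    rewrite !cc_val. destruct (Nat.eq_dec 0 0); try lia. destruct (Nat.eq_dec (0+0) 0); try lia.
    destruct (Nat.eq_dec 1 0); try lia. destruct (Nat.eq_dec (1 + 0) 0); try lia. unfold hk; simpl; reqR; field.
  - rewrite (Series_single _ j).
    2: { intros n Hn. rewrite cc_val. destruct (Nat.eq_dec (S n) (S j)); try lia.
         destruct (Nat.eq_dec (S n + S j) 0); try lia. ring. }
    rewrite !cc_val. destruct (Nat.eq_dec (S j) (S j)); try lia.
    destruct (Nat.eq_dec (S j + S j) 0); try lia. reqR; field.
Qed.

Lemma coefH_sin A j : 0 < A -> RInt (fun x => HH A x * sin (2 * PI * INR j * x)) 0 1 = 0.
Proof.
  intros HA. rewrite HH_int; auto.
  2: intros; cpt.
  2: intros; apply Rabs_le, SIN_bound.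
  rewrite (Series_ext _ (fun _ => 0)), (Series_ext (fun n => hk A (S n) * _) (fun _ => 0)).
  rewrite (Series_single (fun _ => 0) 0) by auto. reqR; ring.
  intro n; rewrite cs_val; ring.
  intro n; rewrite cs_val; ring.
Qed.

Lemma one_bound : forall x : R, Rabs ((fun _ : R => 1) x) <= 1.
Proof. intros; cbv beta; rewrite Rabs_R1; lra. Qed.

Lemma FF_cont A x : 0 < A -> continuity_pt (FF A) x.
Proof.
  intros HA. unfold FF. apply continuity_pt_plus.
  - apply (continuity_pt_ext (fun x => Series (fun n => G A (INR n + x) * (fun _ => 1) x))).
    { intro y. unfold Fp. apply Series_ext. intro; cbv beta; ring. }
    apply (useries_cont _ _ (r_ok A HA)). 2: apply UB_p; auto; apply one_bound.
    intros n y. apply continuity_pt_mult. apply (continuity_pt_comp (fun x => INR n + x) (G A)). cpt. apply G_cont.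
    apply continuity_pt_const. intros a b; reflexivity.
  - apply (continuity_pt_ext (fun x => Series (fun n => G A (x - INR n - 1) * (fun _ => 1) x))).
    { intro y. unfold Fm. apply Series_ext. intro; cbv beta; ring. }
    apply (useries_cont _ _ (r_ok A HA)). 2: apply UB_m; auto; apply one_bound.
    intros n y. apply continuity_pt_mult. apply (continuity_pt_comp (fun x => x - INR n - 1) (G A)). cpt. apply G_cont.
    apply continuity_pt_const. intros a b; reflexivity.
Qed.

Lemma HH_cont A x : 0 < A -> continuity_pt (HH A) x.
Proof.
  intros HA. unfold HH. apply continuity_pt_plus.
  - apply (useries_cont _ _ (r2_ok A HA)). intros; cpt. apply UB_Hp1; auto.
  - apply (useries_cont _ _ (r2_ok A HA)). intros; cpt. apply UB_Hm1; auto.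
Qed.

Lemma Fp_ex A x : 0 < A -> ex_series (fun n => G A (INR n + x)).
Proof.
  intros HA. apply (ex_series_ext (fun n => G A (INR n + x) * (fun _ => 1) x)).
  intro; cbv beta; reqR; ring.
  exact (useries_ex (fun n x => G A (INR n + x) * (fun _ => 1) x) _ (r_ok A HA) (UB_p A _ HA one_bound) x).
Qed.

Lemma Fm_ex A x : 0 < A -> ex_series (fun n => G A (x - INR n - 1)).
Proof.
  intros HA. apply (ex_series_ext (fun n => G A (x - INR n - 1) * (fun _ => 1) x)).
  intro; cbv beta; reqR; ring.
  exact (useries_ex (fun n x => G A (x - INR n - 1) * (fun _ => 1) x) _ (r_ok A HA) (UB_m A _ HA one_bound) x).
Qed.

Lemma FF_per A x : 0 < A -> FF A (x + 1) = FF A x.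
Proof.
  intros HA. unfold FF, Fp, Fm.
  rewrite (Series_incr_1 (fun n => G A (INR n + x))) by (apply Fp_ex; auto).
  rewrite (Series_incr_1 (fun n => G A (x + 1 - INR n - 1))).
  2: { apply (ex_series_ext (fun n => G A ((x + 1) - INR n - 1))). intros; reflexivity. apply Fm_ex; auto. }
  rewrite (Series_ext (fun k => G A (x + 1 - INR (S k) - 1)) (fun n => G A (x - INR n - 1))).
  rewrite (Series_ext (fun n => G A (INR n + (x + 1))) (fun k => G A (INR (S k) + x))).
  simpl INR. replace (0 + x) with x by ring. replace (x + 1 - 0 - 1) with x by ring. ring.
  intro n. rewrite S_INR. f_equal. ring.
  intro n. rewrite S_INR. f_equal. ring.
Qed.

Lemma HH_per A x : HH A (x + 1) = HH A x.
Proof.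
  unfold HH, Hp, Hm. f_equal; apply Series_ext; intro n.
  - f_equal. rewrite <- (cos_per n x 1). simpl INR. reflexivity.
  - f_equal. rewrite <- (cos_per (S n) x 1). simpl INR. reflexivity.
Qed.

Lemma per_shift (h : R -> R) : (forall x, continuity_pt h x) -> (forall x, h (x + 1) = h x) ->
  forall c, RInt h c (c + 1) = RInt h 0 1.
Proof.
  intros Hc Hp c.
  assert (Hex : forall a b, ex_RInt h a b) by (intros; apply cont_ex_RInt; auto).
  rewrite <- (RInt_ChaslesR h c 0 (c + 1)), <- (RInt_ChaslesR h 0 1 (c + 1)) by auto.
  assert (E : RInt h 1 (c + 1) = RInt h 0 c).
  { replace 1 with (0 + 1) at 1 by ring. rewrite <- RInt_shiftR by auto.
    apply RInt_extR. intros; apply Hp. }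
  rewrite E, (RInt_swapR h c 0) by auto. reqR; ring.
Qed.

Inductive TP : (R -> R) -> Prop :=
| TP0 : TP (fun _ => 0)
| TPc : forall f c k, TP f -> TP (fun y => f y + c * cos (2 * PI * INR k * y))
| TPe : forall f g, TP f -> (forall y, f y = g y) -> TP g.

Lemma TP_cont f : TP f -> forall x, continuity_pt f x.
Proof.
  induction 1; intro x.
  - apply continuity_pt_const. intros a b; reflexivity.
  - apply continuity_pt_plus; auto. cpt.
  - apply (continuity_pt_ext f); auto.
Qed.

Lemma TP_scal f c : TP f -> TP (fun y => c * f y).
Proof.
  induction 1.
  - eapply TPe. apply TP0. intros; cbv beta; ring.
  - eapply TPe. apply (TPc _ (c * c0) k IHTP). intros; cbv beta; ring.
  - eapply TPe. apply IHTP. intros; cbv beta; rewrite H0; ring.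
Qed.

Lemma TP_add f g : TP f -> TP g -> TP (fun y => f y + g y).
Proof.
  intros Hf. induction 1.
  - eapply TPe. apply Hf. intros; cbv beta; ring.
  - eapply TPe. apply (TPc _ c k IHTP). intros; cbv beta; ring.
  - eapply TPe. apply IHTP. intros; cbv beta; rewrite H0; ring.
Qed.

Lemma cos_prod k y : cos (2 * PI * INR k * y) * cos (2 * PI * y) =
  / 2 * cos (2 * PI * INR (S k) * y) + / 2 * cos (2 * PI * INR (match k with O => 1 | S k' => k' end)%nat * y).
Proof.
  destruct k as [|k'].
  - simpl INR. rewrite !Rmult_0_r, Rmult_0_l, cos_0. replace (2 * PI * (0 + 1) * y) with (2 * PI * y) by ring. rewrite Rmult_1_r. field.
  - replace (2 * PI * INR (S (S k')) * y) with (2 * PI * INR (S k') * y + 2 * PI * y)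
      by (rewrite (S_INR (S k')); ring).
    replace (2 * PI * INR k' * y) with (2 * PI * INR (S k') * y - 2 * PI * y)
      by (rewrite (S_INR k'); ring).
    rewrite cos_plus, cos_minus. field.
Qed.

Lemma TP_cosmul f : TP f -> TP (fun y => f y * cos (2 * PI * y)).
Proof.
  induction 1.
  - eapply TPe. apply TP0. intros; cbv beta; ring.
  - eapply TPe. apply (TPc _ (/ 2 * c) (match k with O => 1 | S k' => k' end)%nat
                       (TPc _ (/ 2 * c) (S k) IHTP)).
    intros; cbv beta. rewrite Rmult_plus_distr_r, (Rmult_assoc c), cos_prod. ring.
  - eapply TPe. apply IHTP. intros; cbv beta; rewrite H0; ring.
Qed.

Definition Kn (n : nat) (y : R) := ((1 + cos (2 * PI * y)) / 2) ^ n.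

Lemma TP_Kn n : TP (Kn n).
Proof.
  induction n as [|n IH].
  - eapply TPe. apply (TPc _ 1 0 TP0). intros; unfold Kn; simpl. rewrite !Rmult_0_r, Rmult_0_l, cos_0. ring.
  - eapply TPe. apply (TP_add _ _ (TP_scal _ (/ 2) IH) (TP_scal _ (/ 2) (TP_cosmul _ IH))).
    intros; unfold Kn; cbv beta. simpl. field.
Qed.

Section Complete.
Variable D : R -> R.
Hypothesis Dc : forall x, continuity_pt D x.
Hypothesis Dp : forall x, D (x + 1) = D x.
Hypothesis Dcos : forall k, RInt (fun x => D x * cos (2 * PI * INR k * x)) 0 1 = 0.
Hypothesis Dsin : forall k, RInt (fun x => D x * sin (2 * PI * INR k * x)) 0 1 = 0.
Variable b : R.

Lemma exD f : (forall x, continuity_pt f x) -> forall a c, ex_RInt (fun x => D x * f x) a c.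
Proof. intros Hf a c. apply cont_ex_RInt. intro; apply continuity_pt_mult; auto. Qed.

Lemma D_cos_shift k : RInt (fun x => D x * cos (2 * PI * INR k * (x - b))) (b - 1/2) (b + 1/2) = 0.
Proof.
  replace (b + 1/2) with ((b - 1/2) + 1) by field.
  rewrite (RInt_extR _ (fun x => cos (2 * PI * INR k * b) * (D x * cos (2 * PI * INR k * x))
                            + sin (2 * PI * INR k * b) * (D x * sin (2 * PI * INR k * x)))).
  2: { intros x _. replace (2 * PI * INR k * (x - b)) with (2 * PI * INR k * x - 2 * PI * INR k * b) by ring.
       rewrite cos_minus. ring. }
  rewrite RInt_plusR, !RInt_scalR.
  - rewrite !per_shift, Dcos, Dsin. reqR; ring.
    + intro; apply continuity_pt_mult; auto. cpt.
    + intro; rewrite Dp. f_equal. apply (sin_per k x 1).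
    + intro; apply continuity_pt_mult; auto. cpt.
    + intro; rewrite Dp. f_equal. apply (cos_per k x 1).
  - apply exD. intros; cpt.
  - apply exD. intros; cpt.
  - apply ex_RInt_scalR, exD. intros; cpt.
  - apply ex_RInt_scalR, exD. intros; cpt.
Qed.

Lemma TP_zero f : TP f -> RInt (fun x => D x * f (x - b)) (b - 1/2) (b + 1/2) = 0.
Proof.
  induction 1.
  - rewrite (RInt_extR _ (fun _ => 0)). rewrite RInt_const. unfold scal; simpl; unfold mult; simpl. ring.
    intros; ring.
  - rewrite (RInt_extR _ (fun x => D x * f (x - b) + c * (D x * cos (2 * PI * INR k * (x - b))))).
    2: { intros; ring. }
    rewrite RInt_plusR, RInt_scalR, IHTP, D_cos_shift. reqR; ring.
    + apply exD. intro; cpt.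
    + apply cont_ex_RInt. intro x; apply continuity_pt_mult; auto.
      apply (continuity_pt_comp (fun x => x - b) f). cpt. apply TP_cont; auto.
    + apply ex_RInt_scalR, exD. intro; cpt.
  - rewrite <- IHTP. apply RInt_extR. intros; rewrite H0; reflexivity.
Qed.
End Complete.

Lemma Kn_base y : 0 <= (1 + cos (2 * PI * y)) / 2 <= 1.
Proof. pose proof (COS_bound (2 * PI * y)). lra. Qed.

Lemma Kn_nonneg n y : 0 <= Kn n y.
Proof. unfold Kn. apply pow_le. apply Kn_base. Qed.

Lemma Kn_cont n y : continuity_pt (Kn n) y.
Proof. unfold Kn. cpt. Qed.

Lemma cos_abs y : cos (2 * PI * y) = cos (2 * PI * Rabs y).
Proof.
  unfold Rabs. destruct (Rcase_abs y). rewrite <- cos_neg. f_equal. ring. reflexivity.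
Qed.

Lemma Kn_upper n y d : 0 < d -> d <= Rabs y <= 1/2 ->
  Kn n y <= ((1 + cos (2 * PI * d)) / 2) ^ n.
Proof.
  intros Hd Hy. unfold Kn. apply pow_incr. split. apply Kn_base.
  rewrite cos_abs. assert (HP := PI_RGT_0).
  destruct (Req_dec d (Rabs y)) as [E|E]. rewrite E; lra.
  assert (cos (2 * PI * Rabs y) < cos (2 * PI * d)).
  { apply cos_decreasing_1; nra. }
  lra.
Qed.

Lemma Kn_lower n y d : 0 < d <= 1/2 -> Rabs y <= d / 2 ->
  ((1 + cos (PI * d)) / 2) ^ n <= Kn n y.
Proof.
  intros Hd Hy. unfold Kn. apply pow_incr. split.
  pose proof (COS_bound (PI * d)). lra.
  rewrite cos_abs. assert (HP := PI_RGT_0). pose proof (Rabs_pos y).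
  destruct (Req_dec (PI * d) (2 * PI * Rabs y)) as [E|E]. rewrite E; lra.
  assert (cos (PI * d) < cos (2 * PI * Rabs y)).
  { apply cos_decreasing_1; nra. }
  lra.
Qed.

Lemma cont_abs (f : R -> R) x : continuity_pt f x -> continuity_pt (fun x => Rabs (f x)) x.
Proof. intros H. apply (continuity_pt_comp f Rabs); auto. apply Rcontinuity_abs. Qed.

Lemma conc (D : R -> R) b : (forall x, continuity_pt D x) ->
  (forall n, RInt (fun x => D x * Kn n (x - b)) (b - 1/2) (b + 1/2) = 0) -> D b = 0.
Proof.
  intros Dc HZ.
  destruct (Req_dec (D b) 0) as [|Hne]; auto. exfalso.
  assert (Hab : 0 < Rabs (D b)) by (apply Rabs_pos_lt; auto).
  set (eps := Rabs (D b) / 4).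
  assert (He : 0 < eps) by (unfold eps; lra).
  destruct (proj1 (continuity_pt_locally D b) (Dc b) (mkposreal eps He)) as [d0 Hd0].
  set (d := Rmin (d0 / 2) (1/4)).
  assert (Hd0p := cond_pos d0).
  assert (Hd : 0 < d <= 1/4) by (split; [unfold d; apply Rmin_case; lra | apply Rmin_r]).
  assert (Hdd0 : d < d0) by (unfold d; pose proof (Rmin_l (d0/2) (1/4)); lra).
  assert (Hclose : forall x, Rabs (x - b) <= d -> Rabs (D x - D b) <= eps).
  { intros x Hx. left. apply (Hd0 x). unfold ball; simpl; unfold AbsRing_ball; simpl.
    unfold minus, plus, opp; simpl. change (Rabs (x - b) < d0). lra. }
  destruct (continuity_ab_maj (fun x => Rabs (D x - D b)) (b - 1/2) (b + 1/2)) as [Mx [HM HMx]].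
  { lra. }
  { intros c _. apply cont_abs. apply continuity_pt_minus; auto. apply continuity_pt_const. intros a a'; reflexivity. }
  set (M := Rabs (D Mx - D b)) in *.
  assert (HM0 : 0 <= M) by apply Rabs_pos.
  set (rho := (1 + cos (2 * PI * d)) / 2).
  set (sig := (1 + cos (PI * d)) / 2).
  assert (HP := PI_RGT_0).
  assert (Hcs : cos (2 * PI * d) < cos (PI * d)) by (apply cos_decreasing_1; nra).
  assert (Hsig1 : 0 < cos (PI * d)) by (apply cos_gt_0; nra).
  pose proof (COS_bound (2 * PI * d)).
  assert (Hrho : 0 <= rho < sig) by (unfold rho, sig; lra).
  assert (Hsig : 0 < sig) by lra.
  destruct (pow_lt_1_zero (rho / sig)) with (y := eps * d / (M + 1)) as [n Hn].
  { rewrite Rabs_pos_eq. apply Rmult_lt_reg_r with sig. lra. unfold Rdiv. rewrite Rmult_assoc, Rinv_l; lra.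
    apply Rmult_le_pos. lra. left; apply Rinv_0_lt_compat; lra. }
  { apply Rdiv_lt_0_compat. nra. lra. }
  specialize (Hn n (Nat.le_refl n)).
  rewrite Rabs_pos_eq in Hn by (apply pow_le, Rmult_le_pos; [lra | left; apply Rinv_0_lt_compat; lra]).
  assert (Hn' : rho ^ n * / sig ^ n < eps * d / (M + 1)) by (rewrite <- pow_inv, <- Rpow_mult_distr; exact Hn). clear Hn. rename Hn' into Hn.
  assert (Hsn : 0 < sig ^ n) by (apply pow_lt; lra).
  set (W := RInt (fun x => Kn n (x - b)) (b - 1/2) (b + 1/2)).
  assert (HKc : forall x, continuity_pt (fun x => Kn n (x - b)) x).
  { intro. apply (continuity_pt_comp (fun x => x - b) (Kn n)). cpt. apply Kn_cont. }
  assert (HKex : forall a c, ex_RInt (fun x => Kn n (x - b)) a c) by (intros; apply cont_ex_RInt; auto).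
  assert (HW : d * sig ^ n <= W).
  { unfold W.
    rewrite <- (RInt_ChaslesR _ (b - 1/2) (b - d/2) (b + 1/2)) by auto.
    rewrite <- (RInt_ChaslesR _ (b - d/2) (b + d/2) (b + 1/2)) by auto.
    assert (0 <= RInt (fun x => Kn n (x - b)) (b - 1/2) (b - d/2)).
    { apply RInt_ge_0; auto. lra. intros; apply Kn_nonneg. }
    assert (0 <= RInt (fun x => Kn n (x - b)) (b + d/2) (b + 1/2)).
    { apply RInt_ge_0; auto. lra. intros; apply Kn_nonneg. }
    assert (d * sig ^ n <= RInt (fun x => Kn n (x - b)) (b - d/2) (b + d/2)).
    { apply Rle_trans with (RInt (fun _ => sig ^ n) (b - d/2) (b + d/2)).
      rewrite RInt_const. unfold scal; simpl; unfold mult; simpl. right; field.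
      apply RInt_le; auto. lra. apply cont_ex_RInt; intros; apply continuity_pt_const; intros a a'; reflexivity.
      intros x Hx. apply Kn_lower. lra. apply Rabs_le; lra. }
    change (d * sig ^ n <= RInt (fun x => Kn n (x - b)) (b - 1/2) (b - d/2)
      + (RInt (fun x => Kn n (x - b)) (b - d/2) (b + d/2) + RInt (fun x => Kn n (x - b)) (b + d/2) (b + 1/2))).
    lra. }
  assert (HDc : forall x, continuity_pt (fun x => (D b - D x) * Kn n (x - b)) x).
  { intro. apply continuity_pt_mult; auto. apply continuity_pt_minus; auto.
    apply continuity_pt_const; intros a a'; reflexivity. }
  assert (E1 : RInt (fun x => (D b - D x) * Kn n (x - b)) (b - 1/2) (b + 1/2) = D b * W).
  { rewrite (RInt_extR _ (fun x => D b * Kn n (x - b) - D x * Kn n (x - b))) by (intros; ring).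
    rewrite RInt_minusR, RInt_scalR, HZ. unfold W. reqR; ring. auto. apply ex_RInt_scalR; auto.
    apply cont_ex_RInt. intro; apply continuity_pt_mult; auto. }
  assert (E2 : Rabs (D b * W) <= eps * W + M * rho ^ n).
  { rewrite <- E1. eapply Rle_trans. apply abs_RInt_le. lra. apply cont_ex_RInt; auto.
    apply Rle_trans with (RInt (fun x => eps * Kn n (x - b) + M * rho ^ n) (b - 1/2) (b + 1/2)).
    - apply RInt_le. lra. apply cont_ex_RInt. intro. apply cont_abs. auto.
      apply cont_ex_RInt. intro. apply continuity_pt_plus. apply continuity_pt_scal; auto.
      apply continuity_pt_const; intros a a'; reflexivity.
      intros x Hx. rewrite Rabs_mult, (Rabs_pos_eq (Kn n (x - b))) by apply Kn_nonneg.
      rewrite <- Rabs_Ropp, Ropp_minus_distr.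
      pose proof (Kn_nonneg n (x - b)). pose proof (Rabs_pos (D x - D b)).
      assert (0 <= M * rho ^ n) by (apply Rmult_le_pos; auto; apply pow_le; lra).
      destruct (Rle_dec (Rabs (x - b)) d) as [Hc|Hc].
      + specialize (Hclose x Hc). nra.
      + assert (Kn n (x - b) <= rho ^ n) by (apply (Kn_upper n (x - b) d); try lra; split; try lra; apply Rabs_le; lra).
        assert (Rabs (D x - D b) <= M) by (apply HM; lra). nra.
    - rewrite RInt_plusR, RInt_scalR, RInt_const. unfold scal; simpl; unfold mult; simpl. unfold W. apply Req_le. replace (b + 1 / 2 - (b - 1 / 2)) with 1 by field. ring.
      auto. apply ex_RInt_scalR; auto. apply cont_ex_RInt; intros; apply continuity_pt_const; intros a a'; reflexivity. }
  assert (HW0 : 0 < W) by (pose proof (Rmult_lt_0_compat d (sig ^ n)); lra).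
  rewrite Rabs_mult, (Rabs_pos_eq W) in E2 by lra.
  assert (E3 : 3 * eps * (d * sig ^ n) <= M * rho ^ n).
  { replace (Rabs (D b)) with (4 * eps) in E2 by (unfold eps; field). nra. }
  assert (E4 : M * rho ^ n < eps * d * sig ^ n).
  { apply Rmult_lt_compat_r with (r := sig ^ n) in Hn; auto.
    rewrite Rmult_assoc, Rinv_l, Rmult_1_r in Hn by lra.
    apply Rle_lt_trans with ((M + 1) * (rho ^ n)). 
    - apply Rmult_le_compat_r. apply pow_le; lra. lra.
    - apply Rmult_lt_compat_l with (r := M + 1) in Hn. 2: lra.
      replace ((M + 1) * (eps * d / (M + 1) * sig ^ n)) with (eps * d * sig ^ n) in Hn by (field; lra). lra. }
  assert (0 < eps * d * sig ^ n) by (apply Rmult_lt_0_compat; [apply Rmult_lt_0_compat|]; lra). lra.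
Qed.

Lemma complete (Dd : R -> R) : (forall x, continuity_pt Dd x) -> (forall x, Dd (x + 1) = Dd x) ->
  (forall k, RInt (fun x => Dd x * cos (2 * PI * INR k * x)) 0 1 = 0) ->
  (forall k, RInt (fun x => Dd x * sin (2 * PI * INR k * x)) 0 1 = 0) ->
  forall b, Dd b = 0.
Proof.
  intros Dc Dp Dcos Dsin b. apply (conc Dd b Dc).
  intro n. apply (TP_zero Dd Dc Dp Dcos Dsin b (Kn n) (TP_Kn n)).
Qed.

Lemma FF_eq A y : 0 < A -> FF A y = IF A * HH A y.
Proof.
  intros HA.
  set (Dd := fun x => FF A x - IF A * HH A x).
  assert (Dc : forall x, continuity_pt Dd x).
  { intro x. unfold Dd. apply continuity_pt_minus. apply FF_cont; auto.
    apply continuity_pt_scal. apply HH_cont; auto. }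
  assert (Hex : forall (f : R -> R), (forall x, continuity_pt f x) -> forall g, (forall x, continuity_pt g x) ->
     ex_RInt (fun x => f x * g x) 0 1).
  { intros. apply cont_ex_RInt. intro; apply continuity_pt_mult; auto. }
  assert (E := complete Dd Dc).
  enough (Dd y = 0) by (unfold Dd in H; lra).
  apply E.
  - intro x. unfold Dd. rewrite FF_per, HH_per; auto.
  - intro k. unfold Dd.
    rewrite (RInt_extR _ (fun x => FF A x * cos (2 * PI * INR k * x) - IF A * (HH A x * cos (2 * PI * INR k * x)))) by (intros; ring).
    rewrite RInt_minusR, RInt_scalR, coefF_cos, coefH_cos; auto.
    unfold hk. reqR; ring.
    apply Hex. intro; apply HH_cont; auto. intro; cpt.
    apply Hex. intro; apply FF_cont; auto. intro; cpt.
    apply ex_RInt_scalR. apply Hex. intro; apply HH_cont; auto. intro; cpt.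
  - intro k. unfold Dd.
    rewrite (RInt_extR _ (fun x => FF A x * sin (2 * PI * INR k * x) - IF A * (HH A x * sin (2 * PI * INR k * x)))) by (intros; ring).
    rewrite RInt_minusR, RInt_scalR, coefF_sin, coefH_sin; auto.
    reqR; ring.
    apply Hex. intro; apply HH_cont; auto. intro; cpt.
    apply Hex. intro; apply FF_cont; auto. intro; cpt.
    apply ex_RInt_scalR. apply Hex. intro; apply HH_cont; auto. intro; cpt.
Qed.

Lemma gauss0_c A x : continuity_pt (fun u => exp (- (A * (u * u))) * cos (0 * u)) x.
Proof. cpt. Qed.

Lemma J_scale A N : 0 < A -> sqrt A * J A N 0 = J 1 (sqrt A * N) 0.
Proof.
  intros HA. unfold J.
  assert (H := RInt_comp_lin (fun v => exp (- (1 * (v * v))) * cos (0 * v)) (sqrt A) 0 (- N) N).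
  replace (sqrt A * - N + 0) with (- (sqrt A * N)) in H by ring.
  replace (sqrt A * N + 0) with (sqrt A * N) in H by ring.
  rewrite <- H. 2: apply cont_ex_RInt; intro; apply gauss0_c.
  rewrite <- RInt_scalR. 2: apply cont_ex_RInt; intro; apply gauss0_c.
  apply RInt_extR. intros x _. unfold scal; simpl; unfold mult; simpl.
  rewrite !Rmult_0_l, cos_0. f_equal. f_equal. f_equal.
  replace (sqrt A * x + 0) with (sqrt A * x) by ring.
  replace (sqrt A * x * (sqrt A * x)) with ((sqrt A * sqrt A) * (x * x)) by ring.
  rewrite sqrt_sqrt; lra.
Qed.

Lemma T_mono M M' : 0 <= M <= M' -> J 1 M 0 <= J 1 M' 0.
Proof.
  intros HM. unfold J.
  assert (Hex : forall a b, ex_RInt (fun u => exp (- (1 * (u * u))) * cos (0 * u)) a b)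
    by (intros; apply cont_ex_RInt; intro; apply gauss0_c).
  assert (Hp : forall x, 0 <= exp (- (1 * (x * x))) * cos (0 * x)).
  { intro. rewrite Rmult_0_l, cos_0, Rmult_1_r. left; apply exp_pos. }
  rewrite <- (RInt_ChaslesR _ (- M') (- M) M') by auto.
  rewrite <- (RInt_ChaslesR _ (- M) M M') by auto.
  assert (0 <= RInt (fun u => exp (- (1 * (u * u))) * cos (0 * u)) (- M') (- M))
    by (apply RInt_ge_0; auto; lra).
  assert (0 <= RInt (fun u => exp (- (1 * (u * u))) * cos (0 * u)) M M')
    by (apply RInt_ge_0; auto; lra).
  match goal with |- ?a <= ?b + (?c + ?d) => change (a <= (b:R) + ((c:R) + (d:R))) end.
  lra.
Qed.

Lemma IF_lim A : 0 < A -> is_lim_seq (fun N => J A (INR N + 1) 0) (IF A).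
Proof.
  intros HA. assert (H := coef_J A 0 HA ltac:(intros; rewrite !Rmult_0_l; reflexivity)).
  replace (IF A) with (RInt (fun x => FF A x * cos (0 * x)) 0 1). exact H.
  unfold IF. apply RInt_extR. intros. rewrite Rmult_0_l, cos_0. ring.
Qed.

Lemma T_le_L n : J 1 (INR n + 1) 0 <= IF 1.
Proof.
  destruct (Rle_dec (J 1 (INR n + 1) 0) (IF 1)) as [|Hn]; auto. exfalso.
  assert (H := IF_lim 1 Rlt_0_1). apply is_lim_seq_spec in H.
  assert (He : 0 < J 1 (INR n + 1) 0 - IF 1) by lra.
  destruct (H (mkposreal _ He)) as [N HN]. simpl in HN.
  specialize (HN (max n N) (Nat.le_max_r _ _)).
  assert (J 1 (INR n + 1) 0 <= J 1 (INR (max n N) + 1) 0).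
  { apply T_mono. pose proof (pos_INR n). split. lra. apply Rplus_le_compat_r, le_INR, Nat.le_max_l. }
  apply Rabs_lt_between in HN. lra.
Qed.

Lemma IF_scale A : 0 < A -> sqrt A * IF A = IF 1.
Proof.
  intros HA.
  assert (HsA : 0 < sqrt A) by (apply sqrt_lt_R0; lra).
  eapply lim_uniq. apply (is_lim_seq_scal_l _ (sqrt A) _ (IF_lim A HA)).
  eapply is_lim_seq_ext. intro N. symmetry. apply J_scale; auto.
  apply is_lim_seq_spec. intros eps.
  assert (H := IF_lim 1 Rlt_0_1). apply is_lim_seq_spec in H.
  destruct (H eps) as [N0 HN0].
  destruct (INR_unbounded ((INR N0 + 1) / sqrt A)) as [N1 HN1].
  exists N1. intros N HN.
  specialize (HN0 N0 (Nat.le_refl _)).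
  apply Rabs_lt_between in HN0.
  assert (HX : INR N0 + 1 <= sqrt A * (INR N + 1)).
  { apply le_INR in HN. apply Rmult_lt_compat_l with (r := sqrt A) in HN1; auto.
    replace (sqrt A * ((INR N0 + 1) / sqrt A)) with (INR N0 + 1) in HN1 by (field; lra). nra. }
  assert (Hlo : J 1 (INR N0 + 1) 0 <= J 1 (sqrt A * (INR N + 1)) 0).
  { apply T_mono. pose proof (pos_INR N0). lra. }
  assert (Hhi : J 1 (sqrt A * (INR N + 1)) 0 <= IF 1).
  { destruct (INR_unbounded (sqrt A * (INR N + 1))) as [m Hm].
    apply Rle_trans with (J 1 (INR m + 1) 0). apply T_mono. split.
    pose proof (pos_INR N); nra. lra. apply T_le_L. }
  apply Rabs_lt_between. lra.
Qed.

Lemma Series_nonneg (a : nat -> R) : ex_series a -> (forall n, 0 <= a n) -> 0 <= Series a.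
Proof.
  intros He Hp. assert (H := Series_le (fun _ => 0) a ltac:(intros; split; [lra | apply Hp]) He).
  rewrite (Series_single (fun _ => 0) 0) in H by auto. exact H.
Qed.

Lemma FF_pos A x : 0 < A -> 0 < FF A x.
Proof.
  intros HA. unfold FF, Fp, Fm.
  rewrite Series_incr_1 by (apply Fp_ex; auto).
  assert (0 <= Series (fun k => G A (INR (S k) + x))).
  { apply Series_nonneg. 2: intros; left; apply G_pos.
    apply (ex_series_ext (fun k => (fun n => G A (INR n + x)) (S k))). intros; reflexivity.
    apply (ex_series_incr_1 (fun n => G A (INR n + x))). apply Fp_ex; auto. }
  assert (0 <= Series (fun n => G A (x - INR n - 1))).
  { apply Series_nonneg. apply Fm_ex; auto. intros; left; apply G_pos. }
  pose proof (G_pos A (INR 0 + x)). lra.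
Qed.

Lemma HH_FF0 A : 0 < A -> HH A 0 = FF (PI ^ 2 / A) 0.
Proof.
  intros HA. unfold HH, Hp, Hm, FF, Fp, Fm. f_equal; apply Series_ext; intro n; unfold hk, G.
  - rewrite Rmult_0_r, cos_0, Rmult_1_r, Rplus_0_r. f_equal. field. lra.
  - rewrite Rmult_0_r, cos_0, Rmult_1_r. f_equal. rewrite S_INR. field. lra.
Qed.

Lemma IF_val A : 0 < A -> IF A = sqrt (PI / A).
Proof.
  intros HA. assert (HP := PI_RGT_0).
  assert (Hpi : IF PI = 1).
  { assert (E := FF_eq PI 0 HP). rewrite HH_FF0 in E by auto.
    replace (PI ^ 2 / PI) with PI in E by (field; lra).
    assert (Hpos := FF_pos PI 0 HP).
    apply Rmult_eq_reg_r with (FF PI 0). lra. lra. }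
  assert (S1 := IF_scale PI HP). rewrite Hpi, Rmult_1_r in S1.
  assert (S2 := IF_scale A HA). rewrite <- S1 in S2.
  assert (HsA : 0 < sqrt A) by (apply sqrt_lt_R0; lra).
  rewrite sqrt_div by lra.
  apply Rmult_eq_reg_l with (sqrt A). rewrite S2. field. lra. lra.
Qed.

Theorem poisson_gauss A y : 0 < A -> FF A y = sqrt (PI / A) * HH A y.
Proof. intros HA. rewrite <- IF_val by auto. apply FF_eq; auto. Qed.

Lemma zsum_scal (K : R) (f : Z -> R) : zsum_R (fun s => K * f s) = K * zsum_R f.
Proof. unfold zsum_R. rewrite !Series_scal_l. ring. Qed.

Lemma zsum_ext (f g : Z -> R) : (forall s, f s = g s) -> zsum_R f = zsum_R g.
Proof. intros H. unfold zsum_R. f_equal; apply Series_ext; intro; apply H. Qed.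

Lemma IZR_pos n : IZR (Z.of_nat n) = INR n.
Proof. symmetry; apply INR_IZR_INZ. Qed.

Lemma IZR_neg n : IZR (- Z.of_nat (S n)) = - INR n - 1.
Proof. rewrite opp_IZR, IZR_pos, S_INR. ring. Qed.

Lemma zsum_FF A y : zsum_R (fun s => G A (IZR s + y)) = FF A y.
Proof.
  unfold zsum_R, FF, Fp, Fm. f_equal; apply Series_ext; intro n.
  - rewrite IZR_pos. reflexivity.
  - rewrite IZR_neg. f_equal. ring.
Qed.

Lemma zsum_HH A y : zsum_R (fun s => exp (- (PI ^ 2 / A * IZR s ^ 2)) * cos (2 * PI * y * IZR s)) = HH A y.
Proof.
  unfold zsum_R, HH, Hp, Hm, hk. f_equal; apply Series_ext; intro n.
  - rewrite IZR_pos. f_equal. f_equal. unfold Rdiv; ring. f_equal. ring.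
  - rewrite IZR_neg. rewrite S_INR. f_equal. f_equal. unfold Rdiv; ring.
    replace (2 * PI * y * (- INR n - 1)) with (- (2 * PI * (INR n + 1) * y)) by ring.
    apply cos_neg.
Qed.

Lemma zsum_sin0 B y : zsum_R (fun s => exp (- (B * IZR s ^ 2)) * sin (2 * PI * y * IZR s)) = 0.
Proof.
  unfold zsum_R.
  rewrite Series_incr_1_aux.
  2: { simpl. rewrite Rmult_0_r, sin_0. ring. }
  rewrite <- Rplus_opp_r with (r := Series (fun k => exp (- (B * IZR (Z.of_nat (S k)) ^ 2)) * sin (2 * PI * y * IZR (Z.of_nat (S k))))).
  f_equal. rewrite <- Series_opp. apply Series_ext. intro n.
  replace (IZR (- Z.of_nat (S n))) with (- IZR (Z.of_nat (S n))) by (rewrite opp_IZR; reflexivity).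
  replace (2 * PI * y * - IZR (Z.of_nat (S n))) with (- (2 * PI * y * IZR (Z.of_nat (S n)))) by ring.
  rewrite sin_neg. replace ((- IZR (Z.of_nat (S n))) ^ 2) with (IZR (Z.of_nat (S n)) ^ 2) by ring. ring.
Qed.

Lemma Q2R_0 : Q2R 0 = 0.
Proof. unfold Q2R. simpl. ring. Qed.

Lemma theta_val (al : Q) (z T : R) :
  theta 0%Q al (RtoC z) (Ci * RtoC T) =
  (zsum_R (fun s => exp (- (PI * T * IZR s ^ 2)) * cos (2 * PI * (z + Q2R al) * IZR s)),
   zsum_R (fun s => exp (- (PI * T * IZR s ^ 2)) * sin (2 * PI * (z + Q2R al) * IZR s))).
Proof.
  unfold theta, zsum_C. f_equal; apply zsum_ext; intro s; rewrite Q2R_0;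
  unfold cexp, Re, Im, Cmult, Cplus, RtoC, Ci; simpl; f_equal; try (f_equal; ring).
Qed.

Lemma const_eq mu nu Gamma : 0 < mu -> 0 < nu -> Gamma <> 0 ->
  / sqrt (2 * PI * nu) * sqrt (PI / ((1 + nu / mu) * Gamma ^ 2 / (2 * nu)))
  = sqrt (2 * PI * mu / Gamma ^ 2) * / sqrt (2 * PI * (mu + nu)).
Proof.
  intros Hm Hn HG. assert (HP := PI_RGT_0).
  assert (HG2 : 0 < Gamma ^ 2) by (apply pow2_gt_0; auto).
  assert (Hc : 0 < 1 + nu / mu) by (assert (0 < nu / mu) by (apply Rdiv_lt_0_compat; lra); lra).
  rewrite <- !sqrt_inv.
  rewrite <- sqrt_mult, <- sqrt_mult.
  - f_equal. field. repeat split; lra.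
  - left. apply Rdiv_lt_0_compat. nra. auto.
  - left. apply Rinv_0_lt_compat. nra.
  - left. apply Rinv_0_lt_compat. nra.
  - left. apply Rdiv_lt_0_compat. auto. apply Rdiv_lt_0_compat. nra. lra.
Qed.

Theorem lemma1 (mu nu Gamma : R) (a : Q) (q : R) :
  0 < mu -> 0 < nu -> Gamma <> 0 ->
  RtoC (E_conv_G mu Gamma a nu q) =
  (RtoC (sqrt (2 * PI * mu / Gamma ^ 2) * Gauss (mu + nu) q)
   * theta 0%Q a (RtoC (- q / ((1 + nu / mu) * Gamma)))
                 (Ci * RtoC (2 * PI * nu / ((1 + nu / mu) * Gamma ^ 2))))%C.
Proof.
  intros Hm Hn HG. assert (HP := PI_RGT_0).
  assert (HG2 : 0 < Gamma ^ 2) by (apply pow2_gt_0; auto).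
  assert (Hc : 0 < 1 + nu / mu) by (assert (0 < nu / mu) by (apply Rdiv_lt_0_compat; lra); lra).
  set (c := 1 + nu / mu) in *.
  set (A := c * Gamma ^ 2 / (2 * nu)).
  assert (HA : 0 < A) by (unfold A; apply Rdiv_lt_0_compat; nra).
  set (y := Q2R a - q / (c * Gamma)).
  set (K := / sqrt (2 * PI * nu) * exp (- q ^ 2 / (2 * (mu + nu)))).
  assert (E1 : E_conv_G mu Gamma a nu q = K * FF A y).
  { unfold E_conv_G. rewrite <- zsum_FF, <- zsum_scal. apply zsum_ext. intro s.
    unfold K, Gauss, G. set (x := IZR s + Q2R a).
    replace (IZR s + y) with (x - q / (c * Gamma)) by (unfold x, y; ring).
    match goal with |- exp ?a * (?k * exp ?b) = ?k * exp ?c * exp ?d =>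
      transitivity (k * exp (a + b)); [rewrite exp_plus; ring | rewrite (Rmult_assoc k), <- exp_plus; f_equal; f_equal] end.
    unfold A, c. field. repeat split; lra. }
  rewrite theta_val.
  set (T := 2 * PI * nu / (c * Gamma ^ 2)).
  assert (E2 : zsum_R (fun s => exp (- (PI * T * IZR s ^ 2)) * cos (2 * PI * (- q / (c * Gamma) + Q2R a) * IZR s))
               = HH A y).
  { rewrite <- zsum_HH. apply zsum_ext. intro s. f_equal. f_equal. f_equal. f_equal.
    unfold T, A. field. repeat split; lra. f_equal. f_equal. unfold y. unfold Rdiv; ring. }
  rewrite E2, zsum_sin0.
  unfold Cmult, RtoC; simpl. f_equal.
  - rewrite E1, poisson_gauss by auto. unfold Gauss.
    replace (- q ^ 2 / (2 * (mu + nu))) with (- q ^ 2 / (2 * (mu + nu))) by reflexivity.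
    unfold K. rewrite Rmult_0_r, Rminus_0_r.
    transitivity ((/ sqrt (2 * PI * nu) * sqrt (PI / A)) * exp (- q ^ 2 / (2 * (mu + nu))) * HH A y).
    ring. unfold A, c. rewrite const_eq by auto. replace (Gamma * (Gamma * 1)) with (Gamma ^ 2) by ring. ring.
  - ring.
Qed.
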